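(* Let $$S(t,p,q,x,y,u,v)=\sum_{\pi}t^{|\pi|}p^{\mathrm{asc}(\pi)}q^{\mathrm{des}(\pi)}x^{\mathrm{lmax}(\pi)}y^{\mathrm{rmax}(\pi)}u^{\mathrm{lmin}(\pi)}v^{\mathrm{rmin}(\pi)},$$ the sum over all separable permutations $\pi$, and let $I(t,p,q,x,y,u,v)$ be the same sum restricted to irreducible separable permutations. Then, as formal power series, $$S(t,p,q,x,y,u,v)=xyuvt+p\,S(t,p,q,x,1,u,v)\,I(t,p,q,x,y,1,v)+q\bigl(S(t,p,q,x,y,u,1)-I(t,p,q,x,y,u,1)+xyut\bigr)S(t,p,q,1,y,u,v)$$ and $$I(t,p,q,x,y,u,v)=xyuvt+q\bigl(S(t,p,q,x,y,u,1)-I(t,p,q,x,y,u,1)+xyut\bigr)S(t,p,q,1,y,u,v).$$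
   Context: A permutation of length $n$ is a word $\pi=\pi_1\cdots\pi_n$ containing each element of $[n]$ exactly once; $|\pi|=n$. For $\pi$ of length $m$ and $\sigma$ of length $n$, $\pi\oplus\sigma=\pi_1\cdots\pi_m(\sigma_1+m)\cdots(\sigma_n+m)$ and $\pi\ominus\sigma=(\pi_1+n)\cdots(\pi_m+n)\sigma_1\cdots\sigma_n$. Separable permutations are the permutations of length $\ge1$ obtained from the permutation $1$ by repeatedly applying $\oplus$ and $\ominus$ (equivalently, those avoiding the patterns $2413$ and $3142$); the empty permutation is not separable. The permutation $1$ is irreducible; a permutation of length $n\ge2$ is irreducible if there is no $i$ with $2\le i\le n$ such that every element of $\pi_1\cdots\pi_{i-1}$ is less than every element of $\pi_i\cdots\pi_n$. Statistics: $\mathrm{asc}(\pi)=\#\{i<n:\pi_i<\pi_{i+1}\}$, $\mathrm{des}(\pi)=\#\{i<n:\pi_i>\pi_{i+1}\}$; $\pi_i$ is a left-to-right maximum (minimum) if $\pi_i>\pi_j$ ($\pi_i<\pi_j$) for all $j<i$, and a right-to-left maximum (minimum) if $\pi_i>\pi_j$ ($\pi_i<\pi_j$) for all $j>i$; $\mathrm{lmax},\mathrm{lmin},\mathrm{rmax},\mathrm{rmin}$ count these. *)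

(* Defs.v *)
From HB Require Import structures.
From mathcomp Require Import all_boot all_order all_algebra all_fingroup.
Set Implicit Arguments. Unset Strict Implicit. Unset Printing Implicit Defensive.
Import GRing.Theory.

(* A permutation of length n is represented by an element of {perm 'I_n};
   its one-line word is pi_1 ... pi_n (values shifted by -1, which does not
   affect any of the order-based notions below). *)
Definition word n (s : {perm 'I_n}) : seq nat := [seq val (s i) | i <- enum 'I_n].

Definition asc (w : seq nat) : nat :=
  \sum_(0 <= i < (size w).-1) (nth 0 w i < nth 0 w i.+1).
Definition des (w : seq nat) : nat :=
  \sum_(0 <= i < (size w).-1) (nth 0 w i > nth 0 w i.+1).
Definition lmax (w : seq nat) : nat :=
  \sum_(0 <= i < size w) all (fun j => nth 0 w i > nth 0 w j) (iota 0 i).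
Definition lmin (w : seq nat) : nat :=
  \sum_(0 <= i < size w) all (fun j => nth 0 w i < nth 0 w j) (iota 0 i).
Definition rmax (w : seq nat) : nat :=
  \sum_(0 <= i < size w)
     all (fun j => nth 0 w i > nth 0 w j) (iota i.+1 (size w - i.+1)).
Definition rmin (w : seq nat) : nat :=
  \sum_(0 <= i < size w)
     all (fun j => nth 0 w i < nth 0 w j) (iota i.+1 (size w - i.+1)).

Definition contains_2413 (w : seq nat) : bool :=
  [exists i : 'I_(size w), exists j : 'I_(size w), exists k : 'I_(size w),
   exists l : 'I_(size w),
   [&& i < j, j < k, k < l &
    [&& nth 0 w k < nth 0 w i, nth 0 w i < nth 0 w l & nth 0 w l < nth 0 w j]]].
Definition contains_3142 (w : seq nat) : bool :=
  [exists i : 'I_(size w), exists j : 'I_(size w), exists k : 'I_(size w),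
   exists l : 'I_(size w),
   [&& i < j, j < k, k < l &
    [&& nth 0 w j < nth 0 w l, nth 0 w l < nth 0 w i & nth 0 w i < nth 0 w k]]].

Definition separable (w : seq nat) : bool :=
  [&& 0 < size w, ~~ contains_2413 w & ~~ contains_3142 w].

Definition irreducible (w : seq nat) : bool :=
  (size w == 1) ||
  ((2 <= size w) &&
   ~~ has (fun i => all (fun a => all (fun b => a < b) (drop i w)) (take i w))
          (iota 1 (size w).-1)).

Definition weight (R : comPzRingType) (p q x y u v : R) (w : seq nat) : R :=
  p ^+ asc w * q ^+ des w * x ^+ lmax w * y ^+ rmax w * u ^+ lmin w * v ^+ rmin w.

(* coefficient of t^n in S(t,p,q,x,y,u,v) *)
Definition Scoef (R : comPzRingType) (n : nat) (p q x y u v : R) : R :=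
  \sum_(s : {perm 'I_n} | separable (word s)) weight p q x y u v (word s).

(* coefficient of t^n in I(t,p,q,x,y,u,v) *)
Definition Icoef (R : comPzRingType) (n : nat) (p q x y u v : R) : R :=
  \sum_(s : {perm 'I_n} | separable (word s) && irreducible (word s))
     weight p q x y u v (word s).

(* Main.v *)
Require Import Defs.
From mathcomp Require Import all_boot all_order all_algebra all_fingroup.
From mathcomp Require Import zify ring.
Set Implicit Arguments. Unset Strict Implicit. Unset Printing Implicit Defensive.
Import GRing.Theory.

Definition rb (b : bool) (m n : nat) : bool := if b then m < n else n < m.
Lemma rb_asym b m n : rb b m n -> ~~ rb b n m.
Proof. by case: b => /=; lia. Qed.
Lemma rb_trans b m n k : rb b m n -> rb b n k -> rb b m k.
Proof. by case: b => /=; lia. Qed.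
Lemma rb_total b m n : m != n -> rb b m n || rb b n m.
Proof. by case: b => /=; lia. Qed.
Lemma rbN b m n : rb (~~ b) m n = rb b n m.
Proof. by case: b. Qed.
Lemma rb_add b k m n : rb b (k + m) (k + n) = rb b m n.
Proof. by case: b => /=; rewrite ltn_add2l. Qed.
Lemma rb_neq b m n : rb b m n -> m != n.
Proof. by case: b => /=; lia. Qed.

Definition P n : seq (seq nat) := [seq word s | s <- enum {perm 'I_n}].

Lemma word_nth n (s : {perm 'I_n}) (i : 'I_n) : nth 0 (word s) i = s i.
Proof. rewrite /word (nth_map i) ?size_enum_ord //. rewrite nth_ord_enum //. Qed.

Lemma word_inj n : injective (@word n).
Proof.
move=> s1 s2 H; apply/permP => i; apply: val_inj.
by have := congr1 (fun w => nth 0 w i) H; rewrite !word_nth.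
Qed.

Lemma P_uniq n : uniq (P n).
Proof. rewrite map_inj_uniq ?enum_uniq //; exact: word_inj. Qed.

Lemma word_perm n (s : {perm 'I_n}) : perm_eq (word s) (iota 0 n).
Proof.
apply: uniq_perm; first by rewrite map_inj_uniq ?enum_uniq // => i j /val_inj/perm_inj.
  exact: iota_uniq.
move=> m; rewrite /word mem_iota add0n /=; apply/idP/idP.
  by case/mapP => i _ ->.
move=> lt; apply/mapP; exists (s^-1 (Ordinal lt))%g; first by rewrite mem_enum.
by rewrite permKV.
Qed.

Lemma mem_P n w : (w \in P n) = perm_eq w (iota 0 n).
Proof.
apply/idP/idP; first by case/mapP => s _ ->; exact: word_perm.
move=> H.
have Hs : size w = n by rewrite (perm_size H) size_iota.
have Hu : uniq w by rewrite (perm_uniq H) iota_uniq.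
have Hlt i : i < n -> nth 0 w i < n.
  move=> lt; have : nth 0 w i \in w by rewrite mem_nth ?Hs.
  by rewrite (perm_mem H) mem_iota.
pose f (i : 'I_n) : 'I_n := Ordinal (Hlt i (ltn_ord i)).
have finj : injective f.
  move=> i j [] /eqP; rewrite nth_uniq ?Hs // => /eqP; exact: val_inj.
apply/mapP; exists (perm finj); first by rewrite mem_enum.
apply: (@eq_from_nth _ 0); first by rewrite size_map size_enum_ord.
move=> i; rewrite Hs => lt.
by rewrite (word_nth _ (Ordinal lt)) permE.
Qed.

Lemma sum_P (R : comPzRingType) n (Q : pred (seq nat)) (F : seq nat -> R) :
  (\sum_(s : {perm 'I_n} | Q (word s)) F (word s) = \sum_(w <- P n | Q w) F w)%R.
Proof. by rewrite big_map big_enum_cond; apply: eq_bigl. Qed.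

Lemma size_P n : size (P n) = n`!.
Proof. by rewrite size_map -cardE card_Sn. Qed.

Definition A b (w : seq nat) := \sum_(0 <= i < (size w).-1) rb b (nth 0 w i) (nth 0 w i.+1).
Definition Lst b (w : seq nat) :=
  \sum_(0 <= i < size w) all (fun a => rb b a (nth 0 w i)) (take i w).
Definition Rst b (w : seq nat) :=
  \sum_(0 <= i < size w) all (fun a => rb b a (nth 0 w i)) (drop i.+1 w).

Lemma ascE w : asc w = A true w. Proof. by []. Qed.
Lemma desE w : des w = A false w. Proof. by []. Qed.
Lemma lmaxE w : lmax w = Lst true w.
Proof.
apply: eq_big_nat => i /andP[_ lt].
by rewrite -(map_nth_iota0 0 (ltnW lt)) all_map.
Qed.
Lemma lminE w : lmin w = Lst false w.
Proof.
apply: eq_big_nat => i /andP[_ lt].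
by rewrite -(map_nth_iota0 0 (ltnW lt)) all_map.
Qed.
Lemma drop_iota_nth (w : seq nat) i : drop i.+1 w = map (nth 0 w) (iota i.+1 (size w - i.+1)).
Proof. by rewrite map_nth_iota // take_oversize // size_drop. Qed.
Lemma rmaxE w : rmax w = Rst true w.
Proof. by apply: eq_big_nat => i /andP[_ lt]; rewrite drop_iota_nth all_map. Qed.
Lemma rminE w : rmin w = Rst false w.
Proof. by apply: eq_big_nat => i /andP[_ lt]; rewrite drop_iota_nth all_map. Qed.

Lemma Lst_cat b s1 s2 : Lst b (s1 ++ s2) = Lst b s1 +
  \sum_(0 <= j < size s2) (all (fun a => rb b a (nth 0 s2 j)) s1 &&
                           all (fun a => rb b a (nth 0 s2 j)) (take j s2)).
Proof.
rewrite /Lst size_cat (@big_cat_nat _ _ _ (size s1)) ?leq_addr //.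
congr (_ + _).
  by apply: eq_big_nat => i /andP[_ lt]; rewrite nth_cat lt take_cat lt.
rewrite -{1}(add0n (size s1)) big_addn addKn.
apply: eq_big_nat => j _.
by rewrite nth_cat take_cat ltnNge leq_addl /= addnK all_cat.
Qed.

Lemma Lst_cat_rel b s1 s2 : allrel (rb b) s1 s2 -> Lst b (s1 ++ s2) = Lst b s1 + Lst b s2.
Proof.
move/allrelP=> H; rewrite Lst_cat; congr (_ + _).
apply: eq_big_nat => j /andP[_ lt].
have -> : all (fun a => rb b a (nth 0 s2 j)) s1 by apply/allP => a ain; apply: H => //; exact: mem_nth.
by [].
Qed.

Lemma Lst_cat_nrel b s1 s2 : allrel (rb (~~ b)) s1 s2 -> s1 != [::] ->
  Lst b (s1 ++ s2) = Lst b s1.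
Proof.
move/allrelP=> H ne; rewrite Lst_cat big1_seq ?addn0 // => j /andP[_].
rewrite mem_iota add0n subn0 => /andP[_ lt].
case: s1 ne H => // a s1' _ H.
have : rb (~~ b) a (nth 0 s2 j) by apply: H; [exact: mem_head | exact: mem_nth].
by rewrite rbN => /rb_asym /negbTE; rewrite /= => ->.
Qed.

Lemma drop_cat_lt (s1 s2 : seq nat) i : i < size s1 -> drop i.+1 (s1 ++ s2) = drop i.+1 s1 ++ s2.
Proof.
move=> lt; rewrite drop_cat; case: ltnP => // h.
have e : i.+1 = size s1 by lia.
by rewrite e subnn drop0 drop_size.
Qed.

Lemma Rst_cat b s1 s2 : Rst b (s1 ++ s2) =
  \sum_(0 <= i < size s1) (all (fun a => rb b a (nth 0 s1 i)) (drop i.+1 s1) &&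
                           all (fun a => rb b a (nth 0 s1 i)) s2) + Rst b s2.
Proof.
rewrite /Rst size_cat (@big_cat_nat _ _ _ (size s1)) ?leq_addr //.
congr (_ + _).
  by apply: eq_big_nat => i /andP[_ lt]; rewrite nth_cat lt drop_cat_lt // all_cat.
rewrite -{1}(add0n (size s1)) big_addn addKn.
apply: eq_big_nat => j _.
rewrite nth_cat ltnNge leq_addl /= addnK drop_cat.
have -> : ((j + size s1).+1 < size s1) = false by lia.
by have -> : (j + size s1).+1 - size s1 = j.+1 by lia.
Qed.

Lemma Rst_cat_rel b s1 s2 : allrel (rb (~~ b)) s1 s2 -> Rst b (s1 ++ s2) = Rst b s1 + Rst b s2.
Proof.
move/allrelP=> H; rewrite Rst_cat; congr (_ + _).
apply: eq_big_nat => i /andP[_ lt].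
have -> : all (fun a => rb b a (nth 0 s1 i)) s2.
  by apply/allP => a ain; rewrite -rbN; apply: H => //; exact: mem_nth.
by rewrite andbT.
Qed.

Lemma Rst_cat_nrel b s1 s2 : allrel (rb b) s1 s2 -> s2 != [::] ->
  Rst b (s1 ++ s2) = Rst b s2.
Proof.
move/allrelP=> H ne; rewrite Rst_cat big1_seq ?add0n // => i /andP[_].
rewrite mem_iota add0n subn0 => /andP[_ lt].
case: s2 ne H => // a s2' _ H.
have : rb b (nth 0 s1 i) a by apply: H; [exact: mem_nth | exact: mem_head].
by move=> /rb_asym /negbTE; rewrite /= => ->; rewrite andbF.
Qed.

Lemma le_pred_add k m : 0 < m -> k <= (k + m).-1.
Proof. lia. Qed.

Lemma A_cat b s1 s2 : s1 != [::] -> s2 != [::] ->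
  A b (s1 ++ s2) = A b s1 + rb b (nth 0 s1 (size s1).-1) (nth 0 s2 0) + A b s2.
Proof.
move=> ne1 ne2.
have h1 : 0 < size s1 by case: s1 ne1.
have h2 : 0 < size s2 by case: s2 ne2.
rewrite /A size_cat.
rewrite (@big_cat_nat _ _ _ (size s1)) //; last exact: le_pred_add.
rewrite (@big_cat_nat _ _ _ (size s1).-1 0 (size s1)) //; last exact: leq_pred.
congr (_ + _ + _).
  apply: eq_big_nat => i /andP[_ lt].
  have l1 : i < size s1 by lia.
  have l2 : i.+1 < size s1 by lia.
  by rewrite !nth_cat l1 l2.
  have l1 : (size s1).-1 < size s1 by lia.
  rewrite big_ltn // prednK // big_geq // /= addn0.
  by rewrite !nth_cat l1 ltnn subnn.
rewrite -{1}(add0n (size s1)) big_addn.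
have -> : (size s1 + size s2).-1 - size s1 = (size s2).-1 by lia.
apply: eq_big_nat => j _.
rewrite !nth_cat.
have l1 : (j + size s1 < size s1) = false by lia.
have l2 : ((j + size s1).+1 < size s1) = false by lia.
have l3 : j + size s1 - size s1 = j by lia.
have l4 : (j + size s1).+1 - size s1 = j.+1 by lia.
by rewrite l1 l2 l3 l4.
Qed.

Lemma A_shift b k w : A b (map (addn k) w) = A b w.
Proof.
rewrite /A size_map; apply: eq_big_nat => i /andP[_ lt].
by rewrite !(nth_map 0) ?rb_add //; lia.
Qed.
Lemma Lst_shift b k w : Lst b (map (addn k) w) = Lst b w.
Proof.
rewrite /Lst size_map; apply: eq_big_nat => i /andP[_ lt].
rewrite (nth_map 0) // -map_take all_map; congr (nat_of_bool _); apply: eq_all => a /=; exact: rb_add.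
Qed.
Lemma Rst_shift b k w : Rst b (map (addn k) w) = Rst b w.
Proof.
rewrite /Rst size_map; apply: eq_big_nat => i /andP[_ lt].
rewrite (nth_map 0) // -map_drop all_map; congr (nat_of_bool _); apply: eq_all => a /=; exact: rb_add.
Qed.

Definition oplus (a b : seq nat) := a ++ map (addn (size a)) b.
Definition ominus (a b : seq nat) := map (addn (size b)) a ++ b.

Lemma rb_false m n : rb false m n = rb true n m.
Proof. by []. Qed.

Lemma allrel_oplus (a b : seq nat) : all (fun z => z < size a) a ->
  allrel (rb true) a (map (addn (size a)) b).
Proof.
move/allP=> H; apply/allrelP => z t za /mapP [c _ ->] /=.
by have := H z za; lia.
Qed.

Lemma allrel_ominus (a b : seq nat) : all (fun z => z < size b) b ->
  allrel (rb false) (map (addn (size b)) a) b.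
Proof.
move/allP=> H; apply/allrelP => z t /mapP [c _ ->] tb /=.
by have := H t tb; lia.
Qed.

Lemma nth_rel b (s1 s2 : seq nat) : s1 != [::] -> s2 != [::] -> allrel (rb b) s1 s2 ->
  rb b (nth 0 s1 (size s1).-1) (nth 0 s2 0).
Proof.
move=> ne1 ne2 /allrelP; apply.
  by apply: mem_nth; case: s1 ne1.
by apply: mem_nth; case: s2 ne2.
Qed.

Local Open Scope ring_scope.

Lemma weight_oplus (R : comPzRingType) (p q x y u v : R) a b :
  a != [::] -> b != [::] -> all (fun z => z < size a)%N a ->
  weight p q x y u v (oplus a b) = p * weight p q x 1 u v a * weight p q x y 1 v b.
Proof.
move=> na nb /(allrel_oplus b) H.
have nb' : map (addn (size a)) b != [::] by case: (b) nb.
have r1 := nth_rel na nb' H.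
have r2 : rb false (nth 0 a (size a).-1) (nth 0 (map (addn (size a)) b) 0) = false.
  by rewrite rb_false; apply/negbTE/rb_asym.
rewrite /weight /oplus !ascE !desE !lmaxE !lminE !rmaxE !rminE.
rewrite !A_cat // r1 r2 (Lst_cat_rel H) (@Lst_cat_nrel false) // (@Rst_cat_nrel true) //.
rewrite (@Rst_cat_rel false) // !A_shift !Lst_shift !Rst_shift.
rewrite !expr1n !exprD /= !expr1 !expr0.
ring.
Qed.

Lemma weight_ominus (R : comPzRingType) (p q x y u v : R) a b :
  a != [::] -> b != [::] -> all (fun z => z < size b)%N b ->
  weight p q x y u v (ominus a b) = q * weight p q x y u 1 a * weight p q 1 y u v b.
Proof.
move=> na nb /(allrel_ominus a) H.
have na' : map (addn (size b)) a != [::] by case: (a) na.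
have r1 := nth_rel na' nb H.
have r2 : rb true (nth 0 (map (addn (size b)) a) (size (map (addn (size b)) a)).-1) (nth 0 b 0) = false.
  by apply/negbTE; move: r1; rewrite rb_false; apply: rb_asym.
rewrite /weight /ominus !ascE !desE !lmaxE !lminE !rmaxE !rminE.
rewrite !A_cat // r1 r2 (@Lst_cat_rel false) // (@Lst_cat_nrel true) // (@Rst_cat_nrel false) //.
rewrite (@Rst_cat_rel true) // !A_shift !Lst_shift !Rst_shift.
rewrite !expr1n !exprD /= !expr1 !expr0.
ring.
Qed.

Local Close Scope ring_scope.

Definition Qp b (a1 a2 a3 a4 : nat) := [&& rb b a2 a4, rb b a4 a1 & rb b a1 a3].

Definition contP b (w : seq nat) := exists i j k l,
  [/\ i < j, j < k, k < l, l < size w &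
      Qp b (nth 0 w i) (nth 0 w j) (nth 0 w k) (nth 0 w l)].

Definition cb b w := if b then contains_3142 w else contains_2413 w.

Lemma cbP b w : reflect (contP b w) (cb b w).
Proof.
apply: (iffP idP).
  rewrite /cb; case: b => /existsP [i /existsP [j /existsP [k /existsP [l H]]]];
  move/and4P: H => [h1 h2 h3 /and3P [h4 h5 h6]];
  exists i, j, k, l; split => //; rewrite /Qp /= ?h4 ?h5 ?h6 //.
case=> i [j [k [l [h1 h2 h3 h4 h5]]]].
have li : i < size w by lia. have lj : j < size w by lia. have lk : k < size w by lia.
rewrite /cb; case: b h5 => /and3P [h5 h6 h7];
apply/existsP; exists (Ordinal li); apply/existsP; exists (Ordinal lj);
apply/existsP; exists (Ordinal lk); apply/existsP; exists (Ordinal h4).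
all: by rewrite /= h1 h2 h3 /=; apply/and3P; split.
Qed.

Lemma sepE w : separable w = [&& 0 < size w, ~~ cb false w & ~~ cb true w].
Proof. by []. Qed.

Lemma cont_shift b k w : contP b (map (addn k) w) <-> contP b w.
Proof.
rewrite /contP size_map; split; case=> i [j [kk [l [h1 h2 h3 h4 h5]]]];
exists i, j, kk, l; split => //; move: h5; rewrite !(nth_map 0) //; try lia;
by rewrite /Qp !rb_add.
Qed.

Lemma cont_catl b s1 s2 : contP b s1 -> contP b (s1 ++ s2).
Proof.
case=> i [j [k [l [h1 h2 h3 h4 h5]]]]; exists i, j, k, l; rewrite size_cat; split => //; try lia.
rewrite !nth_cat.
have -> : i < size s1 by lia. have -> : j < size s1 by lia. have -> : k < size s1 by lia.
by rewrite h4.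
Qed.

Lemma cont_catr b s1 s2 : contP b s2 -> contP b (s1 ++ s2).
Proof.
case=> i [j [k [l [h1 h2 h3 h4 h5]]]].
exists (size s1 + i), (size s1 + j), (size s1 + k), (size s1 + l); rewrite size_cat; split; try lia.
by rewrite !nth_cat !ltnNge !leq_addr /= !addKn.
Qed.

Lemma straddle c (s1 s2 : seq nat) m m' : allrel (rb c) s1 s2 -> m < size s1 ->
  size s1 <= m' < size s1 + size s2 -> rb c (nth 0 (s1 ++ s2) m) (nth 0 (s1 ++ s2) m').
Proof.
move=> /allrelP H lt /andP [le lt'].
have h : m' - size s1 < size s2 by lia.
rewrite !nth_cat lt ltnNge le /=; apply: H; exact: mem_nth.
Qed.

Lemma cont_cat b c s1 s2 : allrel (rb c) s1 s2 ->
  contP b (s1 ++ s2) <-> contP b s1 \/ contP b s2.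
Proof.
move=> H; split; last by case; [exact: cont_catl | exact: cont_catr].
case=> i [j [k [l [h1 h2 h3 h4 h5]]]]; rewrite size_cat in h4.
case: (ltnP l (size s1)) => hl.
  left; exists i, j, k, l; split => //.
  move: h5; rewrite !nth_cat.
  have -> : i < size s1 by lia. have -> : j < size s1 by lia. have -> : k < size s1 by lia.
  by rewrite hl.
case: (leqP (size s1) i) => hi.
  right; exists (i - size s1), (j - size s1), (k - size s1), (l - size s1); split; try lia.
  move: h5; rewrite !nth_cat.
  have -> : (i < size s1) = false by lia. have -> : (j < size s1) = false by lia.
  have -> : (k < size s1) = false by lia. by have -> : (l < size s1) = false by lia.
exfalso; move: h5; rewrite /Qp.
set vi := nth 0 _ i; set vj := nth 0 _ j; set vk := nth 0 _ k; set vl := nth 0 _ l.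
have Hil : rb c vi vl by apply: straddle => //; lia.
case: (ltnP j (size s1)) => hj.
  case: (ltnP k (size s1)) => hk.
    have Hjl : rb c vj vl by apply: straddle => //; lia.
    by move: Hil Hjl; clear H; case: b; case: c => /=; lia.
  have Hik : rb c vi vk by apply: straddle => //; lia.
  by move: Hil Hik; clear H; case: b; case: c => /=; lia.
have Hik : rb c vi vk by apply: straddle => //; lia.
by move: Hil Hik; clear H; case: b; case: c => /=; lia.
Qed.

Lemma nth_catR (s1 s2 : seq nat) i : nth 0 (s1 ++ s2) (size s1 + i) = nth 0 s2 i.
Proof. by rewrite nth_cat ltnNge leq_addr /= addKn. Qed.
Lemma nth_catL (s1 s2 : seq nat) i : i < size s1 -> nth 0 (s1 ++ s2) i = nth 0 s1 i.
Proof. by move=> h; rewrite nth_cat h. Qed.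

Lemma cont_cat4 b (t1 t2 t3 t4 : seq nat) x y e z :
  x \in t1 -> y \in t2 -> e \in t3 -> z \in t4 -> Qp b x y e z ->
  contP b (t1 ++ t2 ++ t3 ++ t4).
Proof.
move=> hx hy he hz hQ.
exists (index x t1), (size t1 + index y t2), (size t1 + (size t2 + index e t3)),
  (size t1 + (size t2 + (size t3 + index z t4)));
rewrite !size_cat; split.
- by rewrite -index_mem in hx; apply: leq_trans hx (leq_addr _ _).
- by rewrite ltn_add2l; rewrite -index_mem in hy; apply: leq_trans hy (leq_addr _ _).
- by rewrite !ltn_add2l; rewrite -index_mem in he; apply: leq_trans he (leq_addr _ _).
- by rewrite !ltn_add2l index_mem.
rewrite !nth_catR !nth_catL ?index_mem // !nth_index //.
Qed.

Lemma sep_cat c s1 s2 : allrel (rb c) s1 s2 -> s1 != [::] -> s2 != [::] ->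
  separable (s1 ++ s2) = separable s1 && separable s2.
Proof.
move=> H n1 n2.
have E b : cb b (s1 ++ s2) = cb b s1 || cb b s2.
  apply/cbP/orP.
    by move/(cont_cat _ H) => [h|h]; [left|right]; apply/cbP.
  by case=> /cbP h; apply/(cont_cat _ H); [left|right].
rewrite !sepE !E size_cat.
have h1 : 0 < size s1 by case: (s1) n1.
have h2 : 0 < size s2 by case: (s2) n2.
rewrite ltn_addr // h1 h2.
by case: (cb false s1); case: (cb true s1); case: (cb false s2); case: (cb true s2).
Qed.

Lemma sep_shift k w : separable (map (addn k) w) = separable w.
Proof.
rewrite !sepE size_map.
have E b : cb b (map (addn k) w) = cb b w by apply/cbP/cbP; rewrite cont_shift.
by rewrite !E.
Qed.

Lemma sep_oplus a b : a != [::] -> b != [::] -> all (fun z => z < size a) a ->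
  separable (oplus a b) = separable a && separable b.
Proof.
move=> na nb H; rewrite /oplus (sep_cat (allrel_oplus b H)) // ?sep_shift //.
by case: (b) nb.
Qed.

Lemma sep_ominus a b : a != [::] -> b != [::] -> all (fun z => z < size b) b ->
  separable (ominus a b) = separable a && separable b.
Proof.
move=> na nb H; rewrite /ominus (sep_cat (allrel_ominus a H)) // ?sep_shift //.
by case: (a) na.
Qed.

Definition sp b (w : seq nat) i := allrel (rb b) (take i w) (drop i w).
Definition hasS b (w : seq nat) := has (sp b w) (iota 1 (size w).-1).

Lemma hasSP b w : reflect (exists i, 0 < i < size w /\ sp b w i) (hasS b w).
Proof.
apply: (iffP hasP).
  by case=> i; rewrite mem_iota => hi H; exists i; split => //; lia.
by case=> i [hi H]; exists i => //; rewrite mem_iota; lia.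
Qed.

Lemma irrE w : irreducible w = (size w == 1) || ((2 <= size w) && ~~ hasS true w).
Proof. by []. Qed.

Lemma drop_cat_le (s1 s2 : seq nat) j : j <= size s1 -> drop j (s1 ++ s2) = drop j s1 ++ s2.
Proof.
move=> h; rewrite drop_cat; case: ltnP => // h2.
have e : j = size s1 by lia.
by rewrite e subnn drop0 drop_size.
Qed.
Lemma take_cat_le (s1 s2 : seq nat) j : j <= size s1 -> take j (s1 ++ s2) = take j s1.
Proof.
move=> h; rewrite take_cat; case: ltnP => // h2.
have e : j = size s1 by lia.
by rewrite e subnn take0 cats0 take_size.
Qed.
Lemma take_catR (s1 s2 : seq nat) j : take (size s1 + j) (s1 ++ s2) = s1 ++ take j s2.
Proof. by rewrite take_cat ltnNge leq_addr /= addKn. Qed.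
Lemma drop_catR (s1 s2 : seq nat) j : drop (size s1 + j) (s1 ++ s2) = drop j s2.
Proof. by rewrite drop_cat ltnNge leq_addr /= addKn. Qed.

Lemma sp_catR b s1 s2 j : sp b (s1 ++ s2) (size s1 + j) -> sp b s2 j.
Proof. by rewrite /sp take_catR drop_catR allrel_catl => /andP[]. Qed.

Lemma sp_catL b s1 s2 j : j <= size s1 -> sp b (s1 ++ s2) j -> sp b s1 j.
Proof. by move=> h; rewrite /sp take_cat_le // drop_cat_le // allrel_catr => /andP[]. Qed.

Lemma sp_joinR b s1 s2 j : allrel (rb b) s1 s2 -> sp b s2 j -> sp b (s1 ++ s2) (size s1 + j).
Proof.
move=> /allrelP H h; rewrite /sp in h *; rewrite take_catR drop_catR allrel_catl h andbT.
by apply/allrelP => x y hx /mem_drop hy; apply: H.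
Qed.

Lemma sp_joinL b s1 s2 j : allrel (rb b) s1 s2 -> j <= size s1 -> sp b s1 j -> sp b (s1 ++ s2) j.
Proof.
move=> /allrelP H hj h; rewrite /sp in h *; rewrite take_cat_le // drop_cat_le // allrel_catr h /=.
by apply/allrelP => x y /mem_take hx hy; apply: H.
Qed.

Lemma sp_shift b k w j : sp b (map (addn k) w) j = sp b w j.
Proof.
rewrite /sp -map_take -map_drop allrel_mapl allrel_mapr.
by apply: eq_allrel => x y; rewrite rb_add.
Qed.

Lemma hasS_shift b k w : hasS b (map (addn k) w) = hasS b w.
Proof. by rewrite /hasS size_map; apply: eq_has => i; rewrite sp_shift. Qed.

Lemma sp_full b w : sp b w (size w).
Proof. by rewrite /sp drop_size allrel0r. Qed.

Lemma not_both w i j : 0 < i < size w -> 0 < j < size w -> sp true w i -> sp false w j -> False.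
Proof.
move=> hi hj /allrelP H1 /allrelP H2.
have m1 k : 0 < k < size w -> nth 0 w 0 \in take k w.
  move=> hk; have h0 : 0 < k by lia.
  rewrite -(nth_take 0 h0); apply: mem_nth; rewrite size_take_min; move: (size w) hk => sw hk; lia.
have m2 k : 0 < k < size w -> nth 0 w (size w).-1 \in drop k w.
  move=> hk; have e : (size w).-1 = k + (size w - k).-1 by lia.
  by rewrite e -nth_drop; apply: mem_nth; rewrite size_drop; move: (size w) hk => sw hk; lia.
have := H1 _ _ (m1 _ hi) (m2 _ hi); have := H2 _ _ (m1 _ hj) (m2 _ hj).
by rewrite /=; lia.
Qed.

Lemma hasS_size b w : hasS b w -> 1 < size w.
Proof. by case/hasSP => i [hi _]; lia. Qed.

Lemma rb_neg b x y : x != y -> ~~ rb b x y -> rb b y x.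
Proof. by case: b => /=; lia. Qed.

Lemma decomp_aux n : forall w, size w < n -> uniq w -> 1 < size w ->
  ~ contP true w -> ~ contP false w -> exists b i, 0 < i < size w /\ sp b w i.
Proof.
elim: n => // n IH w.
case/lastP: w => [//|s z].
rewrite size_rcons rcons_uniq => hn /andP [zs us] h2 c1 c2.
rewrite -cats1 in c1 c2 *.
case: (ltnP 1 (size s)) => hs; last first.
  case: s hs zs h2 {us hn c1 c2} => [|a [|]] //= _.
  rewrite inE => az _.
  case: (ltngtP a z) => h; [exists true, 1 | exists false, 1 | by rewrite h eqxx in az];
  by split => //; rewrite /sp /= allrel1l /= h.
have cs1 : ~ contP true s by move=> h; apply: c1; exact: cont_catl.
have cs2 : ~ contP false s by move=> h; apply: c2; exact: cont_catl.
have [b [i [hi Hsp]]] := IH s hn us hs cs1 cs2.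
pose Pm := fun i => (0 < i < size s) && sp b s i.
have exP : exists i, Pm i by exists i; apply/andP.
case: (ex_minnP exP) => i0 /andP [hi0 Hi0] Hmin.
set s1 := take i0 s; set s' := drop i0 s.
have es : s = s1 ++ s' by rewrite cat_take_drop.
have Hs1 : size s1 = i0 by rewrite size_take_min; move: (size s) hi0 => ss hh; lia.
have Hs' : 0 < size s' by rewrite size_drop; move: (size s) hi0 => ss hh; lia.
have Hsp0 : allrel (rb b) s1 s' by [].
case: (boolP (all (fun a => rb b a z) s1)) => hA.
  exists b, i0; split; first by move: (size s) hi0 => ss hh; lia.
  rewrite /sp {1 2}es -catA take_size_cat // drop_size_cat // allrel_catr Hsp0 /=.
  by rewrite allrel1r.
case: (boolP (all (fun a => rb b z a) s)) => hB.
  exists (~~ b), (size s); split; first by move: (size s) hs => ss hh; lia.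
  rewrite /sp take_size_cat // drop_size_cat // allrel1r.
  by apply/allP => a ha; rewrite rbN; exact: (allP hB) a ha.
exfalso.
have nz x : x \in s -> x != z by move=> hx; apply: contraNneq zs => <-.
have nz1 x : x \in s1 -> x != z by move=> hx; apply: nz; exact: mem_take hx.
have [a1 ha1 na1] : exists2 a1, a1 \in s1 & ~~ rb b a1 z by apply/allPn.
have [c hc nc] : exists2 c, c \in s & ~~ rb b z c by apply/allPn.
have za1 : rb b z a1 by apply: rb_neg => //; exact: nz1.
have cz : rb b c z by apply: rb_neg => //; rewrite eq_sym; exact: nz.
have hc1 : c \in s1.
  move: hc; rewrite es mem_cat => /orP [//|hc'].
  have := (allrelP Hsp0) _ _ ha1 hc'.
  by move=> h; have := rb_trans za1 h; move/rb_asym; rewrite cz.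
have sz1 : 1 < size s1.
  case: (ltnP 1 (size s1)) => // hle; exfalso.
  move: ha1 hc1 za1 cz; case: (s1) hle => [|x [|]] //= _; rewrite !inE => /eqP -> /eqP ->.
  by move=> h /rb_asym; rewrite h.
have u1 : uniq s1 by move: us; rewrite es cat_uniq => /and3P [].
have cs1' : ~ contP true s1 by move=> h; apply: cs1; rewrite es; exact: cont_catl.
have cs2' : ~ contP false s1 by move=> h; apply: cs2; rewrite es; exact: cont_catl.
have hs1n : size s1 < n by rewrite Hs1; apply: ltn_trans (proj2 (andP hi0)) _; exact: hn.
have [b' [j [hj Hj]]] := IH s1 hs1n u1 sz1 cs1' cs2'.
have eb : b' = ~~ b.
  case: (eqVneq b' b) => [eb|]; last by case: b b' {Hsp Hi0 Hmin hA hB na1 nc za1 cz Hj Pm exP Hsp0} => [] [].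
  exfalso; subst b'.
  have : Pm j.
    apply/andP; split.
      case/andP: hj => hj1 hj2; rewrite hj1 /=; apply: ltn_trans hj2 _.
      by rewrite Hs1; exact: (proj2 (andP hi0)).
    by rewrite es; apply: sp_joinL => //; exact: ltnW (proj2 (andP hj)).
  by move/Hmin; rewrite -Hs1 leqNgt; case/andP: hj => _ ->.
subst b'.
set t1 := take j s1; set t2 := drop j s1.
have e1 : s1 = t1 ++ t2 by rewrite cat_take_drop.
have Ht1 : 0 < size t1.
  rewrite size_takel; [by case/andP: hj | exact: ltnW (proj2 (andP hj))].
have Ht2 : 0 < size t2 by rewrite size_drop subn_gt0; case/andP: hj.
have Hj0 : allrel (rb (~~ b)) t1 t2 by [].
have in1 x : x \in t1 -> x \in s1 by rewrite e1 mem_cat => ->.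
have in2 x : x \in t2 -> x \in s1 by rewrite e1 mem_cat => ->; rewrite orbT.
have [x hx zx] : exists2 x, x \in t1 & rb b z x.
  apply/hasP; apply: contraT => /hasPn Hn.
  have hx0 : nth 0 t1 0 \in t1 by exact: mem_nth.
  have x0z : rb b (nth 0 t1 0) z by apply: rb_neg; [rewrite eq_sym; exact: nz1 (in1 _ hx0) | exact: Hn].
  move: ha1; rewrite e1 mem_cat => /orP [h|h].
    by move: (Hn _ h); rewrite za1.
  have := (allrelP Hj0) _ _ hx0 h; rewrite rbN => h'.
  by have := rb_trans h' x0z; move/rb_asym; rewrite za1.
have [y hy yz] : exists2 y, y \in t2 & rb b y z.
  apply/hasP; apply: contraT => /hasPn Hn.
  have hy0 : nth 0 t2 0 \in t2 by exact: mem_nth.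
  have zy0 : rb b z (nth 0 t2 0).
    by apply: rb_neg; [exact: nz1 (in2 _ hy0) | exact: Hn].
  move: hc1; rewrite e1 mem_cat => /orP [h|h].
    have := (allrelP Hj0) _ _ h hy0; rewrite rbN => h'.
    by have := rb_trans zy0 h'; move/rb_asym; rewrite cz.
  by move: (Hn _ h); rewrite cz.
have he : nth 0 s' 0 \in s' by exact: mem_nth.
have xe : rb b x (nth 0 s' 0) by apply: (allrelP Hsp0) => //; exact: in1.
have hQ : Qp b x y (nth 0 s' 0) z by rewrite /Qp yz zx xe.
have := cont_cat4 hx hy he (mem_head z [::]) hQ.
rewrite catA -e1 catA -es.
by case: (b) c1 c2 => c1 c2 h; [apply: c1 | apply: c2].
Qed.

Lemma decomp w : uniq w -> 1 < size w -> separable w -> hasS true w || hasS false w.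
Proof.
move=> u h2; rewrite sepE => /and3P [_ /cbP n1 /cbP n2].
have [b [i [hi H]]] := decomp_aux (ltnSn (size w)) u h2 n2 n1.
by case: b H => H; apply/orP; [left | right]; apply/hasSP; exists i.
Qed.

Lemma perm_split (s1 s2 : seq nat) n : perm_eq (s1 ++ s2) (iota 0 n) -> allrel (rb true) s1 s2 ->
  perm_eq s1 (iota 0 (size s1)) /\ perm_eq s2 (iota (size s1) (size s2)).
Proof.
move=> H /allrelP Hr.
have hn : n = size s1 + size s2 by rewrite -(size_iota 0 n) -(perm_size H) size_cat.
have u : uniq (s1 ++ s2) by rewrite (perm_uniq H) iota_uniq.
have u1 : uniq s1 by move: u; rewrite cat_uniq => /and3P [].
have sub : {subset iota 0 (size s1) <= s1}.
  move=> v; rewrite mem_iota add0n => /andP [_ hv].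
  have : v \in s1 ++ s2 by rewrite (perm_mem H) mem_iota hn add0n; apply: leq_trans hv (leq_addr _ _).
  rewrite mem_cat => /orP [//|v2].
  have : size s1 <= size (iota 0 v).
    apply: uniq_leq_size => // a ha; rewrite mem_iota add0n; exact: Hr.
  by rewrite size_iota leqNgt hv.
have hsz : size s1 <= size (iota 0 (size s1)) by rewrite size_iota.
have [_ e1] := uniq_min_size (iota_uniq 0 (size s1)) sub hsz.
have p1 : perm_eq s1 (iota 0 (size s1)).
  by apply: uniq_perm; [done | exact: iota_uniq | move=> z; rewrite e1].
split => //.
move: H; rewrite hn iotaD add0n => H.
have H2 : perm_eq (iota 0 (size s1) ++ s2) (iota 0 (size s1) ++ iota (size s1) (size s2)).
  by apply: perm_trans H; rewrite perm_cat2r perm_sym.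
by rewrite perm_cat2l in H2.
Qed.

Lemma perm_all (a : seq nat) k : perm_eq a (iota 0 k) -> all (fun z => z < size a) a.
Proof.
move=> H; apply/allP => z hz; move: hz; rewrite (perm_mem H) mem_iota (perm_size H) size_iota.
by rewrite add0n => /andP [].
Qed.

Lemma perm_oplus a b : perm_eq a (iota 0 (size a)) -> perm_eq b (iota 0 (size b)) ->
  perm_eq (oplus a b) (iota 0 (size a + size b)).
Proof.
move=> Ha Hb; rewrite /oplus iotaD add0n.
have -> : iota (size a) (size b) = map (addn (size a)) (iota 0 (size b)) by rewrite -iotaDl addn0.
by apply: perm_cat => //; exact: perm_map.
Qed.

Lemma perm_ominus a b : perm_eq a (iota 0 (size a)) -> perm_eq b (iota 0 (size b)) ->
  perm_eq (ominus a b) (iota 0 (size a + size b)).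
Proof.
move=> Ha Hb; rewrite /ominus addnC iotaD add0n.
have -> : iota (size b) (size a) = map (addn (size b)) (iota 0 (size a)) by rewrite -iotaDl addn0.
rewrite perm_catC.
by apply: perm_cat => //; exact: perm_map.
Qed.

Lemma perm_unshift (b' : seq nat) k m : perm_eq b' (iota k m) ->
  perm_eq (map (subn^~ k) b') (iota 0 m) /\ map (addn k) (map (subn^~ k) b') = b'.
Proof.
move=> H; split.
  have -> : iota 0 m = map (subn^~ k) (iota k m).
    have -> : iota k m = map (addn k) (iota 0 m) by rewrite -iotaDl addn0.
    rewrite -map_comp.
    by rewrite -[LHS]map_id; apply: eq_map => z /=; rewrite addKn.
  exact: perm_map.
rewrite -map_comp -[RHS]map_id; apply/eq_in_map => z hz /=.
by move: hz; rewrite (perm_mem H) mem_iota => /andP [h _]; rewrite subnKC.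
Qed.

Lemma irr_sep w : separable w -> irreducible w = ~~ hasS true w.
Proof.
rewrite sepE irrE => /andP [h _].
case: (ltngtP (size w) 1) => hs.
- by move: h; rewrite ltnNge -ltnS hs.
- by [].
- by rewrite /= /hasS hs.
Qed.

Lemma sep_ne w : separable w -> w != [::].
Proof. by rewrite sepE; case: w. Qed.

Lemma dec_sum n w : w \in P n -> separable w -> hasS true w ->
  exists a b, [/\ w = oplus a b, size a <= n, a \in P (size a) & b \in P (n - size a)] /\
              [/\ separable a, separable b & irreducible b].
Proof.
rewrite mem_P => Hw Hs Hh.
have sw : size w = n by rewrite (perm_size Hw) size_iota.
pose Pm := fun i => (0 < i < size w) && sp true w i.
have exP : exists i, Pm i by case/hasSP: Hh => i [h1 h2]; exists i; apply/andP.
have ub : forall i, Pm i -> i <= size w by move=> i /andP [/andP [_ /ltnW]].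
case: (ex_maxnP exP ub) => k /andP [hk Hk] Hmax.
set a := take k w; set b' := drop k w.
have ew : w = a ++ b' by rewrite cat_take_drop.
have sa : size a = k by rewrite size_takel //; case/andP: hk => _ /ltnW.
have Hr : allrel (rb true) a b' by [].
have [pa pb'] := perm_split (etrans (congr1 (fun s => perm_eq s _) (esym ew)) Hw) Hr.
have [pb eb] := perm_unshift pb'.
set b := map (subn^~ (size a)) b' in pb eb.
have eo : w = oplus a b by rewrite /oplus eb.
have sb : size b = n - size a by rewrite size_map size_drop sw sa.
have na : a != [::] by apply/eqP => e; move: sa; rewrite e /=; case/andP: hk => h _ h'; move: h; rewrite -h'.
have nb : b != [::].
  apply/eqP => e; move: sb; rewrite e sa /= => /esym/eqP; rewrite subn_eq0 leqNgt -sw.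
  by case/andP: hk => _ ->.
move: (Hs); rewrite eo sep_oplus // ?(perm_all pa) // => /andP [sa' sb'].
exists a, b; split; split => //.
- by rewrite sa -sw; case/andP: hk => _ /ltnW.
- by rewrite mem_P.
- by rewrite mem_P -sb /b size_map.
rewrite irr_sep //; apply/hasSP => [[i [hi Hi]]].
have : Pm (size a + i).
  apply/andP; split.
    rewrite sw; case/andP: hi => h1 h2; apply/andP; split; first by rewrite addn_gt0 h1 orbT.
    by move: h2; rewrite sb -(ltn_add2l (size a)) subnKC // sa -sw; case/andP: hk => _ /ltnW.
  by rewrite ew; apply: sp_joinR => //; rewrite -eb sp_shift.
by move/Hmax; rewrite sa -{2}[k]addn0 leq_add2l leqn0; case/andP: hi => /lt0n_neq0/negbTE ->.
Qed.

Lemma dec_skew n w : w \in P n -> separable w -> hasS false w ->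
  exists a b, [/\ w = ominus a b, size a <= n, a \in P (size a) & b \in P (n - size a)] /\
              [/\ separable a, separable b & ~~ hasS false a].
Proof.
rewrite mem_P => Hw Hs Hh.
have sw : size w = n by rewrite (perm_size Hw) size_iota.
pose Pm := fun i => (0 < i < size w) && sp false w i.
have exP : exists i, Pm i by case/hasSP: Hh => i [h1 h2]; exists i; apply/andP.
case: (ex_minnP exP) => k /andP [hk Hk] Hmin.
set a' := take k w; set b := drop k w.
have ew : w = a' ++ b by rewrite cat_take_drop.
have sa' : size a' = k by rewrite size_takel //; case/andP: hk => _ /ltnW.
have Hr : allrel (rb false) a' b by [].
have Hr' : allrel (rb true) b a' by rewrite allrelC; exact: Hr.
have Hw' : perm_eq (b ++ a') (iota 0 n) by rewrite perm_catC -ew.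
have [pb pa'] := perm_split Hw' Hr'.
have [pa ea] := perm_unshift pa'.
set a := map (subn^~ (size b)) a' in pa ea.
have eo : w = ominus a b by rewrite /ominus ea.
have sa : size a = k by rewrite size_map.
have sb : size b = n - k by rewrite size_drop sw.
have na : a != [::].
  by apply/eqP => e; move: sa; rewrite e /=; case/andP: hk => h _ h'; move: h; rewrite -h'.
have nb : b != [::].
  apply/eqP => e; move: sb; rewrite e /= => /esym/eqP; rewrite subn_eq0 leqNgt -sw.
  by case/andP: hk => _ ->.
move: (Hs); rewrite eo sep_ominus // ?(perm_all pb) // => /andP [sa1 sb1].
exists a, b; split; split => //.
- by rewrite sa -sw; case/andP: hk => _ /ltnW.
- by rewrite mem_P /a size_map.
- by rewrite mem_P sa -sb.
apply/hasSP => [[i [hi Hi]]].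
have : Pm i.
  apply/andP; split.
    case/andP: hi => h1 h2; rewrite h1 /=; apply: ltn_trans h2 _.
    by rewrite sa; case/andP: hk.
  rewrite ew; apply: sp_joinL => //; first by rewrite sa' -sa; exact: ltnW (proj2 (andP hi)).
  by rewrite -ea sp_shift.
by move/Hmin; rewrite leqNgt -sa; case/andP: hi => _ ->.
Qed.

Lemma size_gt0_sep w : separable w -> 0 < size w.
Proof. by rewrite sepE => /andP []. Qed.

Lemma oplus_lt a1 b1 a2 b2 : size a1 < size a2 -> oplus a1 b1 = oplus a2 b2 ->
  irreducible b1 -> separable b1 -> separable b2 -> all (fun z => z < size a2) a2 -> False.
Proof.
move=> lt e irr1 s1 s2 al2.
have H2 : sp true (oplus a2 b2) (size a2).
  by rewrite /sp /oplus take_size_cat // drop_size_cat //; exact: allrel_oplus.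
have ed : size a2 = size a1 + (size a2 - size a1) by rewrite subnKC // ltnW.
move: H2; rewrite -e {1}/oplus ed => /sp_catR; rewrite sp_shift => H.
have hs : size a1 + size b1 = size a2 + size b2.
  by have := congr1 size e; rewrite /oplus !size_cat !size_map.
have := size_gt0_sep s2 => hb2.
move: irr1; rewrite irr_sep // => /hasSP; apply; exists (size a2 - size a1); split => //.
move: (size a1) (size a2) (size b1) (size b2) lt hs hb2 => x1 x2 y1 y2; lia.
Qed.

Lemma oplus_inj a1 b1 a2 b2 : oplus a1 b1 = oplus a2 b2 ->
  irreducible b1 -> separable b1 -> irreducible b2 -> separable b2 ->
  all (fun z => z < size a1) a1 -> all (fun z => z < size a2) a2 -> a1 = a2 /\ b1 = b2.
Proof.
move=> e i1 s1 i2 s2 al1 al2.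
case: (ltngtP (size a1) (size a2)) => h.
- by exfalso; apply: (oplus_lt h e).
- by exfalso; apply: (oplus_lt h (esym e)).
have ea : a1 = a2.
  have := congr1 (take (size a1)) e; rewrite /oplus take_size_cat // h take_size_cat //.
split => //.
have := congr1 (drop (size a1)) e; rewrite /oplus drop_size_cat // h drop_size_cat //.
by move/inj_map; apply; exact: addnI.
Qed.

Lemma ominus_lt a1 b1 a2 b2 : size a1 < size a2 -> ominus a1 b1 = ominus a2 b2 ->
  ~~ hasS false a2 -> all (fun z => z < size b1) b1 -> a1 != [::] -> False.
Proof.
move=> lt e h2 al1 n1.
have H1 : sp false (ominus a1 b1) (size a1).
  rewrite /sp /ominus take_size_cat ?size_map // drop_size_cat ?size_map //.
  exact: allrel_ominus.
move: H1; rewrite e /ominus => /sp_catL; rewrite size_map => /(_ (ltnW lt)); rewrite sp_shift => H.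
move/hasSP: h2; apply; exists (size a1); split => //.
by rewrite lt andbT; case: (a1) n1.
Qed.

Lemma ominus_inj a1 b1 a2 b2 : ominus a1 b1 = ominus a2 b2 ->
  ~~ hasS false a1 -> a1 != [::] -> ~~ hasS false a2 -> a2 != [::] ->
  all (fun z => z < size b1) b1 -> all (fun z => z < size b2) b2 -> a1 = a2 /\ b1 = b2.
Proof.
move=> e h1 n1 h2 n2 al1 al2.
case: (ltngtP (size a1) (size a2)) => h.
- by exfalso; apply: (ominus_lt h e).
- by exfalso; apply: (ominus_lt h (esym e)).
have eb : b1 = b2.
  have := congr1 (drop (size a1)) e; rewrite /ominus drop_size_cat ?size_map //.
  by rewrite h drop_size_cat ?size_map.
split => //.
have := congr1 (take (size a1)) e; rewrite /ominus take_size_cat ?size_map //.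
rewrite h take_size_cat ?size_map // eb.
by move/inj_map; apply; exact: addnI.
Qed.

Lemma conv_sum n a b : size a <= n -> a \in P (size a) -> b \in P (n - size a) ->
  separable a -> separable b ->
  [&& oplus a b \in P n, separable (oplus a b) & hasS true (oplus a b)].
Proof.
rewrite !mem_P => hn pa pb sa sb.
have sz : size b = n - size a by rewrite (perm_size pb) size_iota.
have na := sep_ne sa; have nb := sep_ne sb.
apply/and3P; split.
- by rewrite -(subnKC hn) -sz; apply: perm_oplus => //; rewrite sz.
- by rewrite sep_oplus ?sa ?sb // (perm_all pa).
apply/hasSP; exists (size a); split.
  rewrite size_gt0_sep //= /oplus size_cat size_map -{1}[size a]addn0 ltn_add2l.
  exact: size_gt0_sep.
by rewrite /sp /oplus take_size_cat // drop_size_cat //; exact: allrel_oplus (perm_all pa).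
Qed.

Lemma conv_skew n a b : size a <= n -> a \in P (size a) -> b \in P (n - size a) ->
  separable a -> separable b ->
  [&& ominus a b \in P n, separable (ominus a b) & hasS false (ominus a b)].
Proof.
rewrite !mem_P => hn pa pb sa sb.
have sz : size b = n - size a by rewrite (perm_size pb) size_iota.
have na := sep_ne sa; have nb := sep_ne sb.
apply/and3P; split.
- by rewrite -(subnKC hn) -sz; apply: perm_ominus => //; rewrite sz.
- by rewrite sep_ominus ?sa ?sb // (perm_all pb).
apply/hasSP; exists (size a); split.
  rewrite size_gt0_sep //= /ominus size_cat size_map -{1}[size a]addn0 ltn_add2l.
  exact: size_gt0_sep.
rewrite /sp /ominus take_size_cat ?size_map // drop_size_cat ?size_map //.
exact: allrel_ominus (perm_all pb).
Qed.

Lemma size_inP k a : a \in P k -> size a = k.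
Proof. by rewrite mem_P => /perm_size; rewrite size_iota. Qed.

Lemma uniq_flatten_map (T : eqType) (G : nat -> seq T) (h : T -> nat) (s : seq nat) :
  uniq s -> (forall k, uniq (G k)) -> (forall k x, x \in G k -> h x = k) ->
  uniq (flatten (map G s)).
Proof.
move=> + uG hG; elim: s => //= k s IH /andP [ks us].
rewrite cat_uniq uG IH // andbT /=.
apply/hasPn => z /flatten_mapP [k' k's zk']; apply/negP => zk.
by move: ks; rewrite -(hG _ _ zk) (hG _ _ zk') k's.
Qed.

Definition tpairs (A B : pred (seq nat)) n :=
  flatten [seq [seq (a, b) | a <- [seq a <- P k | A a], b <- [seq b <- P (n - k) | B b]]
          | k <- iota 0 n.+1].

Lemma mem_tpairs A B n (pr : seq nat * seq nat) :
  (pr \in tpairs A B n) =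
  [&& size pr.1 <= n, pr.1 \in P (size pr.1), A pr.1, pr.2 \in P (n - size pr.1) & B pr.2].
Proof.
apply/flatten_mapP/and5P.
  case=> k; rewrite mem_iota add0n ltnS => /andP [_ hk] /allpairsP [[a b] [ha hb ->]] /=.
  move: ha hb; rewrite !mem_filter => /andP [Aa aP] /andP [Bb bP].
  by rewrite (size_inP aP); split.
case=> hn aP Aa bP Bb; exists (size pr.1); first by rewrite mem_iota add0n ltnS.
apply/allpairsP; exists pr; split; last by case: pr {hn aP Aa bP Bb}.
  by rewrite mem_filter Aa.
by rewrite mem_filter Bb.
Qed.

Lemma tpairs_uniq A B n : uniq (tpairs A B n).
Proof.
apply: (@uniq_flatten_map _ _ (fun pr => size pr.1)); first exact: iota_uniq.
  move=> k; apply: allpairs_uniq; try exact/filter_uniq/P_uniq.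
  by move=> [a1 b1] [a2 b2] _ _ /=.
by move=> k pr /allpairsP [[a b] [ha hb ->]] /=; move: ha; rewrite mem_filter => /andP [_ /size_inP].
Qed.

Lemma sum_reindex (R : comPzRingType) (T : eqType) (s : seq (seq nat)) (t : seq T)
  (f : T -> seq nat) (F : seq nat -> R) :
  uniq s -> uniq t -> {in t &, injective f} -> s =i map f t ->
  (\sum_(w <- s) F w = \sum_(y <- t) F (f y))%R.
Proof.
move=> us ut fi e; rewrite -(big_map f xpredT); apply: perm_big; apply: uniq_perm => //.
by rewrite map_inj_in_uniq.
Qed.

Local Open Scope ring_scope.

Lemma ScoefE (R : comPzRingType) n (p q x y u v : R) :
  Scoef n p q x y u v = \sum_(w <- P n | separable w) weight p q x y u v w.
Proof. exact: (sum_P n separable (weight p q x y u v)). Qed.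

Lemma IcoefE (R : comPzRingType) n (p q x y u v : R) :
  Icoef n p q x y u v = \sum_(w <- P n | separable w && irreducible w) weight p q x y u v w.
Proof. exact: (sum_P n (fun w => separable w && irreducible w) (weight p q x y u v)). Qed.

Lemma sum_part (R : comPzRingType) (p q x y u v : R) n :
  \sum_(w <- P n | separable w && hasS true w) weight p q x y u v w =
  p * \sum_(k < n.+1) Scoef k p q x 1 u v * Icoef (n - k) p q x y 1 v.
Proof.
set t := tpairs separable (fun b => separable b && irreducible b) n.
have E1 : \sum_(w <- P n | separable w && hasS true w) weight p q x y u v w =
          \sum_(pr <- t) weight p q x y u v (oplus pr.1 pr.2).
  rewrite -big_filter; apply: sum_reindex.
  - exact/filter_uniq/P_uniq.
  - exact: tpairs_uniq.
  - move=> [a1 b1] [a2 b2]; rewrite !mem_tpairs /=.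
    move=> /and5P [_ pa1 _ _ /andP [sb1 ib1]] /and5P [_ pa2 _ _ /andP [sb2 ib2]] e.
    rewrite mem_P in pa1; rewrite mem_P in pa2.
    by have [-> ->] := oplus_inj e ib1 sb1 ib2 sb2 (perm_all pa1) (perm_all pa2).
  - move=> w; rewrite mem_filter; apply/idP/idP.
      case/andP => /andP [sw hw] wP.
      have [a [b [[ew ha pa pb] [sa sb ib]]]] := dec_sum wP sw hw.
      apply/mapP; exists (a, b) => //.
      by rewrite mem_tpairs /= ha pa sa pb sb ib.
    case/mapP => [[a b]] /=; rewrite mem_tpairs /= => /and5P [ha pa sa pb /andP [sb _]] ->.
    by have /and3P [-> -> ->] := conv_sum ha pa pb sa sb.
rewrite E1.
have E2 : forall pr, pr \in t -> weight p q x y u v (oplus pr.1 pr.2) =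
    p * (weight p q x 1 u v pr.1 * weight p q x y 1 v pr.2).
  move=> [a b]; rewrite mem_tpairs /= => /and5P [_ pa sa _ /andP [sb _]].
  rewrite weight_oplus ?mulrA //; try exact: sep_ne.
  by rewrite mem_P in pa; exact: perm_all pa.
rewrite (eq_big_seq _ E2) /t /tpairs big_flatten big_map.
rewrite mulr_sumr -(big_mkord xpredT (fun k => p * (Scoef k p q x 1 u v * Icoef (n - k) p q x y 1 v))).
rewrite /index_iota subn0.
apply: eq_bigr => k _.
rewrite big_allpairs ScoefE IcoefE big_distrlr mulr_sumr big_filter.
apply: eq_bigr => a _; rewrite big_filter mulr_sumr; apply: eq_bigr => b _.
by [].
Qed.

Local Close Scope ring_scope.

Local Open Scope ring_scope.

Lemma skew_part (R : comPzRingType) (p q x y u v : R) n :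
  \sum_(w <- P n | separable w && hasS false w) weight p q x y u v w =
  q * \sum_(k < n.+1) (\sum_(a <- P k | separable a && ~~ hasS false a) weight p q x y u 1 a)
                       * Scoef (n - k) p q 1 y u v.
Proof.
set t := tpairs (fun a => separable a && ~~ hasS false a) separable n.
have E1 : \sum_(w <- P n | separable w && hasS false w) weight p q x y u v w =
          \sum_(pr <- t) weight p q x y u v (ominus pr.1 pr.2).
  rewrite -big_filter; apply: sum_reindex.
  - exact/filter_uniq/P_uniq.
  - exact: tpairs_uniq.
  - move=> [a1 b1] [a2 b2]; rewrite !mem_tpairs /=.
    move=> /and5P [_ _ /andP [sa1 ha1] pb1 _] /and5P [_ _ /andP [sa2 ha2] pb2 _] e.
    rewrite mem_P in pb1; rewrite mem_P in pb2.
    have al1 := perm_all pb1; have al2 := perm_all pb2.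
    by have [-> ->] := ominus_inj e ha1 (sep_ne sa1) ha2 (sep_ne sa2) al1 al2.
  - move=> w; rewrite mem_filter; apply/idP/idP.
      case/andP => /andP [sw hw] wP.
      have [a [b [[ew ha pa pb] [sa sb ia]]]] := dec_skew wP sw hw.
      apply/mapP; exists (a, b) => //.
      by rewrite mem_tpairs /= ha pa sa pb sb ia.
    case/mapP => [[a b]] /=; rewrite mem_tpairs /= => /and5P [ha pa /andP [sa _] pb sb] ->.
    by have /and3P [-> -> ->] := conv_skew ha pa pb sa sb.
rewrite E1.
have E2 : forall pr, pr \in t -> weight p q x y u v (ominus pr.1 pr.2) =
    q * (weight p q x y u 1 pr.1 * weight p q 1 y u v pr.2).
  move=> [a b]; rewrite mem_tpairs /= => /and5P [_ _ /andP [sa _] pb sb].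
  rewrite weight_ominus ?mulrA //; try exact: sep_ne.
  by rewrite mem_P in pb; exact: perm_all pb.
rewrite (eq_big_seq _ E2) /t /tpairs big_flatten big_map.
rewrite mulr_sumr -(big_mkord xpredT (fun k => q * ((\sum_(a <- P k | separable a && ~~ hasS false a) weight p q x y u 1 a) * Scoef (n - k) p q 1 y u v))).
rewrite /index_iota subn0.
apply: eq_bigr => k _.
rewrite big_allpairs ScoefE big_distrlr mulr_sumr big_filter.
apply: eq_bigr => a _; rewrite big_filter mulr_sumr; apply: eq_bigr => b _.
by [].
Qed.

Lemma sep0 : separable [:: 0%N].
Proof.
rewrite sepE; apply/and3P; split => //; apply/negP; move/cbP;
by case=> i [j [k [l [h1 h2 h3 h4 _]]]]; move: h4 => /=; lia.
Qed.

Lemma weight0 (R : comPzRingType) (p q x y u v : R) : weight p q x y u v [:: 0%N] = x * y * u * v.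
Proof.
rewrite /weight /asc /des /lmax /rmax /lmin /rmin /= !big_nat1 !big_geq //=.
by rewrite !expr0 !expr1 !mul1r.
Qed.

Lemma P1 : P 1 = [:: [:: 0%N]].
Proof.
have := size_P 1%N; case E: (P 1) => [|w [|]] //= _.
have : w \in P 1 by rewrite E mem_head.
by rewrite mem_P => /perm_small_eq -> //.
Qed.

Lemma atom (R : comPzRingType) (p q x y u v : R) n :
  \sum_(w <- P n | separable w && ~~ hasS true w && ~~ hasS false w) weight p q x y u v w =
  (n == 1)%:R * (x * y * u * v).
Proof.
case: n => [|[|n]].
- rewrite mul0r big1_seq // => w /andP [/andP [/andP [sw _] _] wP].
  by move: (size_gt0_sep sw); rewrite (size_inP wP).
- rewrite P1 big_cons big_nil sep0 /= addr0 mul1r.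
  rewrite /hasS /=; exact: weight0.
- rewrite big1_seq /=; first by rewrite mul0r.
  move=> w /andP [/andP [/andP [sw n1] n2] wP].
  have uw : uniq w by move: wP; rewrite mem_P => /perm_uniq ->; exact: iota_uniq.
  have h2 : (1 < size w)%N by rewrite (size_inP wP).
  by move: (decomp uw h2 sw); rewrite (negbTE n1) (negbTE n2).
Qed.

Lemma fs_nts w : hasS false w -> ~~ hasS true w.
Proof.
move=> /hasSP [j [hj Hj]]; apply/negP => /hasSP [i [hi Hi]].
exact: (not_both hi hj Hi Hj).
Qed.

Lemma Jlem (R : comPzRingType) (p q x y u : R) k :
  Scoef k p q x y u 1 - Icoef k p q x y u 1 + (k == 1)%:R * (x * y * u) =
  \sum_(a <- P k | separable a && ~~ hasS false a) weight p q x y u 1 a.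
Proof.
rewrite ScoefE (bigID irreducible) /= IcoefE [X in X - _]addrC addrK.
rewrite [RHS](bigID (hasS true)) /=.
have -> : (x * y * u) = x * y * u * 1 by rewrite mulr1.
rewrite -(atom p q x y u 1 k); congr (_ + _).
  apply: eq_bigl => w; case sw: (separable w); rewrite ?andFb // irr_sep //.
  by move: (@fs_nts w); case: (hasS true w); case: (hasS false w) => // /(_ isT).
apply: eq_bigl => w.
by case: (separable w); case: (hasS true w); case: (hasS false w).
Qed.

Local Close Scope ring_scope.

Local Open Scope ring_scope.

Unset Implicit Arguments.
Theorem theorem3 (R : comPzRingType) (p q x y u v : R) (n : nat) :
  Scoef n p q x y u v =
    (n == 1%N)%:R * (x * y * u * v)
    + p * (\sum_(k < n.+1) Scoef k p q x 1 u v * Icoef (n - k) p q x y 1 v)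
    + q * (\sum_(k < n.+1)
             (Scoef k p q x y u 1 - Icoef k p q x y u 1 + (nat_of_ord k == 1%N)%:R * (x * y * u))
             * Scoef (n - k) p q 1 y u v)
  /\
  Icoef n p q x y u v =
    (n == 1%N)%:R * (x * y * u * v)
    + q * (\sum_(k < n.+1)
             (Scoef k p q x y u 1 - Icoef k p q x y u 1 + (nat_of_ord k == 1%N)%:R * (x * y * u))
             * Scoef (n - k) p q 1 y u v).
Proof.
have Hfs : \sum_(w <- P n | separable w && ~~ hasS true w && hasS false w) weight p q x y u v w
         = \sum_(w <- P n | separable w && hasS false w) weight p q x y u v w.
  apply: eq_bigl => w.
  by move: (@fs_nts w); case: (separable w); case: (hasS true w); case: (hasS false w) => // /(_ isT).
have HJ : \sum_(k < n.+1)
             (Scoef k p q x y u 1 - Icoef k p q x y u 1 + (nat_of_ord k == 1%N)%:R * (x * y * u))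
             * Scoef (n - k) p q 1 y u v =
          \sum_(k < n.+1) (\sum_(a <- P k | separable a && ~~ hasS false a) weight p q x y u 1 a)
                       * Scoef (n - k) p q 1 y u v.
  by apply: eq_bigr => k _; rewrite Jlem.
have Hrest : \sum_(w <- P n | separable w && ~~ hasS true w) weight p q x y u v w =
   q * \sum_(k < n.+1) (\sum_(a <- P k | separable a && ~~ hasS false a) weight p q x y u 1 a)
                       * Scoef (n - k) p q 1 y u v + (n == 1%N)%:R * (x * y * u * v).
  by rewrite (bigID (hasS false)) /= Hfs skew_part atom.
rewrite HJ; split.
  rewrite ScoefE (bigID (hasS true)) /= sum_part Hrest.
  ring.
rewrite IcoefE addrC -Hrest.
apply: eq_bigl => w.
by case sw: (separable w); rewrite ?andFb // irr_sep.
Qed.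

Local Close Scope ring_scope.
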